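(* Let $K$ be a field with $\operatorname{char}(K)=0$ and $a\in K$, $a\neq 0$. If $n\geq 4$, there exist two distinct critical points of $D_n(x,a)$ with equal critical values. If $n\geq 6$, there exist three distinct critical points of $D_n(x,a)$ with equal critical values.
   Context: The $n$-th Dickson polynomial with parameter $a$ is $D_n(x,a)=\sum_{j=0}^{\lfloor n/2\rfloor}\frac{n}{n-j}\binom{n-j}{j}(-a)^jx^{n-2j}$. Critical points are the roots of the derivative (in $\overline{K}$), critical values are the values of the polynomial at them. *)

(* Defs.v *)
From mathcomp Require Import all_boot all_order all_algebra.
Set Implicit Arguments. Unset Strict Implicit. Unset Printing Implicit Defensive.
Import GRing.Theory.
Local Open Scope ring_scope.

Definition dickson (K : fieldType) (n : nat) (a : K) : {poly K} :=
  \sum_(j < n./2.+1)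
     ((n%:R / (n - j)%:R) * ('C(n - j, j))%:R * (- a) ^+ j) *: 'X^(n - 2 * j).

(* Main.v *)
From HB Require Import structures.
From mathcomp Require Import all_boot all_order all_algebra all_field.
From mathcomp Require Import ring lra zify.
Set Implicit Arguments. Unset Strict Implicit. Unset Printing Implicit Defensive.
Import GRing.Theory.
Local Open Scope ring_scope.
Require Import Defs.

Section Op.
Variable F : fieldType.
Variables (a : F) (n : nat).
Definition Op (p : {poly F}) := ('X^2 - (4*a)%:P) * p^`()^`() + 'X * p^`() - (n*n)%:R *: p.

Lemma OpD : {morph Op : x y / x + y}.
Proof. move=> x y; rewrite /Op !derivD scalerDr; ring. Qed.
Lemma Op0 : Op 0 = 0.
Proof. by rewrite /Op !deriv0 scaler0 !mulr0 !subr0 addr0. Qed.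
Lemma OpZ c p : Op (c *: p) = c *: Op p.
Proof. rewrite /Op !derivZ -!mul_polyC; ring. Qed.

Lemma OpX k : Op 'X^k = ((k*k)%:R - (n*n)%:R) *: 'X^k - (4 * a * (k * k.-1)%:R) *: 'X^(k.-2).
Proof.
rewrite /Op !derivXn.
case: k => [|[|k]] /=.
- rewrite deriv0 -!mul_polyC; ring.
- rewrite derivMn derivXn /= -!mul_polyC; ring.
- rewrite derivMn derivXn /= -!mul_polyC !exprS rmorphB rmorphM /= !natrM; ring.
Qed.
End Op.

Lemma binid j t : ((t.+2 * t.+1 * 'C(j.+2 + t, j)) = (j.+1 * (j.+2+t) * 'C(j.+1+t, j.+1)))%N.
Proof.
have h1 := mul_bin_left (j.+1 + t) j.
have h2 := mul_bin_down (j.+2 + t) j.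
rewrite /= in h2.
have e1 : (j.+1 + t - j = t.+1)%N by lia.
have e2 : (j.+2 + t - j = t.+2)%N by lia.
rewrite e1 in h1; rewrite e2 in h2.
have e3 : ((j.+2 + t).-1 = j.+1 + t)%N by lia.
rewrite ?e3 in h2. move: h2; rewrite ?addSn /= => h2.
set A := 'C(j.+1 + t, j.+1) in h1 *. set B := 'C(j.+1 + t, j) in h1 h2 *. set C := 'C(j.+2 + t, j) in h2 *.
nia.
Qed.

Definition cf (F : fieldType) (a : F) n j := n%:R / (n - j)%:R * ('C(n - j, j))%:R * (- a) ^+ j.

Lemma nz_nat (F : fieldType) (hF : [pchar F] =i pred0) m : (m.+1)%:R != 0 :> F.
Proof. by rewrite ((pcharf0P F).1 hF). Qed.

Lemma cf_step (F : fieldType) (hF : [pchar F] =i pred0) (a : F) n j : (j.+1 <= n./2)%N ->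
  cf a n j.+1 * (((n - 2*j.+1) * (n - 2*j.+1))%:R - (n*n)%:R) =
  cf a n j * (4 * a * ((n-2*j) * (n-2*j).-1)%:R).
Proof.
move=> hj.
have [t ->] : exists t, n = (j.+2 + j + t)%N.
  exists (n - (j.+2 + j))%N. have := leq_half_double j.+1 n. lia.
rewrite /cf.
have -> : (j.+2 + j + t - j.+1 = j.+1 + t)%N by lia.
have -> : (j.+2 + j + t - j = j.+2 + t)%N by lia.
have -> : (j.+2 + j + t - 2 * j.+1 = t)%N by lia.
have -> : (j.+2 + j + t - 2 * j = t.+2)%N by lia.
rewrite /=.
rewrite [RHS](_ : _ = (j.+2 + j + t)%:R / (j.+2+t)%:R * (-a)^+j * (4*a) * (t.+2 * t.+1 * 'C(j.+2+t,j))%:R); last first.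
  by rewrite !natrM; ring.
rewrite binid !natrM exprS.
have h1 := nz_nat hF (j + t). have h2 := nz_nat hF (j.+1 + t).
rewrite -addSn in h1. rewrite -addSn in h2.
field.
have -> : (2 + j%:R + t%:R : F) = (j.+2 + t)%:R by ring.
have -> : (1 + j%:R + t%:R : F) = (j.+1 + t)%:R by ring.
by rewrite h1 h2.
Qed.

Lemma ode (F : fieldType) (hF : [pchar F] =i pred0) (a : F) n : Op a n (dickson n a) = 0.
Proof.
have -> : dickson n a = \sum_(j < n./2.+1) cf a n j *: 'X^(n-2*j) by [].
rewrite (big_morph _ (@OpD F a n) (Op0 a n)).
under eq_bigr => j _ do rewrite OpZ OpX scalerBr !scalerA.
rewrite sumrB; apply/eqP; rewrite subr_eq0; apply/eqP.
rewrite big_ord_recl big_ord_recr /=.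
rewrite muln0 subn0 subrr mulr0 scale0r add0r.
have -> : ((n - 2 * n./2) * (n - 2 * n./2).-1 = 0)%N.
  have := odd_double_half n; case: (odd n) => /= h; lia.
rewrite mulr0 mulr0 scale0r addr0.
apply: eq_bigr => i _.
rewrite /bump leq0n add1n (cf_step hF) //.
have e : (n - 2 * i.+1 = (n - 2 * i).-2)%N by rewrite -!subn1; lia.
by rewrite e.

Qed.

Lemma dicksonE (F : fieldType) (a : F) n : dickson n a = \sum_(j < n./2.+1) cf a n j *: 'X^(n-2*j).
Proof. by []. Qed.

Lemma coefD (F : fieldType) (a : F) n i :
  (dickson n a)`_i = \sum_(j < n./2.+1 | (n - 2*j == i)%N) cf a n j.
Proof. by rewrite dicksonE coef_sumMXn. Qed.

Lemma cf_nz (F : fieldType) (hF : [pchar F] =i pred0) (a : F) (ha : a != 0) n j :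
  (0 < n)%N -> (j <= n./2)%N -> cf a n j != 0.
Proof.
move=> hn hj; have hc := (pcharf0P F).1 hF.
have hj2 := leq_half_double j n.
rewrite /cf !mulf_neq0 ?expf_neq0 ?oppr_eq0 ?invr_eq0 ?hc //; try lia.
rewrite -lt0n bin_gt0; lia.
Qed.

Lemma coefD_high (F : fieldType) (a : F) n i : (n < i)%N -> (dickson n a)`_i = 0.
Proof. move=> h; rewrite coefD big_pred0 // => j; apply/eqP; lia. Qed.

Lemma coefD_top (F : fieldType) (hF : [pchar F] =i pred0) (a : F) n : (0 < n)%N -> (dickson n a)`_n = 1.
Proof.
move=> hn; rewrite coefD (bigD1 ord0) /=; last by rewrite muln0 subn0.
rewrite big1 ?addr0; last first.
  move=> j /andP[/eqP hj /eqP h]; exfalso; apply: h; apply: val_inj => /=; lia.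
rewrite /cf subn0 bin0 expr0 mulr1 mulr1 divff //.
by rewrite ((pcharf0P F).1 hF); lia.
Qed.

Lemma size_D (F : fieldType) (hF : [pchar F] =i pred0) (a : F) n : (0 < n)%N -> size (dickson n a) = n.+1.
Proof.
move=> hn; apply/eqP; rewrite eqn_leq; apply/andP; split.
  by apply/leq_sizeP => j hj; rewrite coefD_high.
rewrite ltnNge; apply/negP => /leq_sizeP/(_ n (leqnn n)); rewrite coefD_top // => /eqP; by rewrite oner_eq0.
Qed.

Lemma coefD_par (F : fieldType) (a : F) n i : (i <= 1)%N ->
  (dickson n a)`_i = if (i == odd n)%N then cf a n n./2 else 0.
Proof.
move=> hi; rewrite coefD.
have h := odd_double_half n.
case: ifP => /eqP hin.
  rewrite (bigD1 ord_max) /=; last by apply/eqP; move: hin h; case: (odd n) => /=; lia.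
  rewrite big1 ?addr0 // => j /andP[/eqP hj /eqP hne]; exfalso; apply: hne.
  apply: val_inj => /=. have := ltn_ord j. move: hin h hj; case: (odd n) => /=; lia.
rewrite big_pred0 // => j; apply/eqP => hj. have := ltn_ord j.
move: hin h hj; case: (odd n) => /=; lia.
Qed.

Definition Qp (F : fieldType) (a : F) n (D : {poly F}) :=
  ('X^2 - (4*a)%:P) * D^`() ^+ 2 - (n*n)%:R *: D ^+ 2.

Lemma Qp_deriv (F : fieldType) (a : F) n D : (Qp a n D)^`() = 2%:R%:P * D^`() * Op a n D.
Proof.
rewrite /Qp /Op !expr2; do 3! rewrite ?derivB ?derivM ?derivZ ?derivX ?derivC ?derivD ?derivN.
rewrite ?expr2 -!mul_polyC; ring.
Qed.

Lemma const_poly (F : fieldType) (hF : [pchar F] =i pred0) (p : {poly F}) :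
  p^`() = 0 -> p = (p`_0)%:P.
Proof.
move=> h; apply/polyP => i; rewrite coefC; case: i => [|i] //=.
have := coef_deriv p i; rewrite h coef0 => /esym/eqP.
rewrite -mulr_natr mulf_eq0 ((pcharf0P F).1 hF) orbF => /eqP //.
Qed.

Lemma Qp0 (F : fieldType) (hF : [pchar F] =i pred0) (a : F) (ha : a != 0) n : (0 < n)%N ->
  (Qp a n (dickson n a))`_0 != 0.
Proof.
move=> hn; rewrite -horner_coef0 /Qp !hornerE !horner_coef0 coef_deriv !coefD_par //.
have hc := cf_nz hF ha hn (leqnn n./2).
have hn2 : (n * n)%:R != 0 :> F by rewrite ((pcharf0P F).1 hF) muln_eq0; lia.
have h4 : 4%:R != 0 :> F by rewrite ((pcharf0P F).1 hF).
case: (odd n) => /=.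
  rewrite expr0n /= mulr0 subr0 sub0r. rewrite mulr1n.
  rewrite !mulNr oppr_eq0; apply: mulf_neq0 => //; apply: mulf_neq0 => //; exact: mulf_neq0.
rewrite mul0rn !mulr0 sub0r oppr_eq0.
by apply: mulf_neq0 => //; apply: mulf_neq0.
Qed.

Lemma main_roots (L : closedFieldType) (hL : [pchar L] =i pred0) (a : L) (ha : a != 0) n :
  (0 < n)%N -> exists r : seq L, [/\ uniq r, size r = n.-1, all (root (dickson n a)^`()) r &
     exists k, {in r, forall z, (dickson n a).[z] ^+ 2 = k}].
Proof.
move=> hn; set D := dickson n a; set P := D^`().
have hc := (pcharf0P L).1 hL.
have sD := size_D hL a hn.
have sP : size P = n.
  apply/eqP; rewrite eqn_leq; apply/andP; split.
    have : (size P < size D)%N by apply: lt_size_deriv; rewrite -size_poly_eq0 sD.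
    by rewrite sD.
  rewrite -{1}(prednK hn) leqNgt ltnS; apply/negP => /leq_sizeP/(_ n.-1 (leqnn _)).
  rewrite coef_deriv prednK // coefD_top // => /eqP; rewrite -mulr_natr mul1r hc; lia.
have P0 : P != 0 by rewrite -size_poly_eq0 sP; lia.
have lc0 : lead_coef P != 0 by rewrite lead_coef_eq0.
have [r hr] := closed_field_poly_normal P.
have hsr : size r = n.-1.
  move: (sP); rewrite {1}hr size_scale // size_prod_XsubC; lia.
have hroot : forall z, root P z = (z \in r) by move=> z; rewrite hr rootZ // root_prod_XsubC.
have hQ : Qp a n D = ((Qp a n D)`_0)%:P.
  by apply: const_poly => //; rewrite Qp_deriv ode // mulr0.
have hQ0 := Qp0 hL ha hn.
have hQz : forall z, (z^+2 - 4*a) * P.[z] ^+ 2 - (n*n)%:R * D.[z]^+2 = (Qp a n D)`_0.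
  move=> z; have := congr1 (fun p => p.[z]) hQ; rewrite /= hornerC => <-.
  by rewrite /Qp !hornerE.
have hO : forall z, (z^+2 - 4*a) * P^`().[z] + z * P.[z] - (n*n)%:R * D.[z] = 0.
  move=> z; have := congr1 (fun p => p.[z]) (ode hL a n); rewrite /= horner0 => <-.
  by rewrite /Op !hornerE.
have hnn : (n * n)%:R != 0 :> L by rewrite hc muln_eq0; lia.
exists r; split => //.
- have : separable_poly P.
    rewrite unlock; apply: Pdiv.ClosedField.root_coprimep => x.
    rewrite /root => /eqP Px; apply/negP => /eqP P'x.
    have := hO x; rewrite Px P'x !mulr0 !add0r. move=> /eqP; rewrite oppr_eq0 mulf_eq0 (negPf hnn) /= => /eqP Dx.
    have := hQz x; rewrite Px Dx expr0n /= !mulr0 subr0 => hh; move: hQ0; rewrite -hh eqxx //.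
  by rewrite hr (eqp_separable (eqp_scale _ lc0)) separable_prod_XsubC.
- by apply/allP => z; rewrite hroot.
exists (- (Qp a n D)`_0 / (n*n)%:R) => z; rewrite -hroot /root => /eqP Pz.
have := hQz z; rewrite Pz expr0n /= mulr0 sub0r => <-.
by rewrite opprK mulrAC divff ?mul1r.
Qed.

Lemma classes (F : fieldType) (g : F -> F) (r : seq F) k m :
  uniq r -> (2 * m - 1 <= size r)%N -> {in r, forall z, g z ^+ 2 = k} ->
  exists s : seq F, [/\ uniq s, {subset s <= r}, (m <= size s)%N & {in s &, forall x y, g x = g y}].
Proof.
case: r => [|z0 r'] ur hs hk.
  by exists [::]; split => //=; move: hs => /=; lia.
set r := z0 :: r' in ur hs hk *.
pose p := fun z => g z == g z0.
have hc := count_predC p r.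
have [h1|h2] : (m <= count p r)%N \/ (m <= count (predC p) r)%N by lia.
  exists (filter p r); split; first by rewrite filter_uniq.
  - by move=> x; rewrite mem_filter => /andP[].
  - by rewrite size_filter.
  by move=> x y; rewrite !mem_filter => /andP[/eqP -> _] /andP[/eqP -> _].
exists (filter (predC p) r); split; first by rewrite filter_uniq.
- by move=> x; rewrite mem_filter => /andP[].
- by rewrite size_filter.
have z0r : z0 \in r by rewrite inE eqxx.
have key : forall x, x \in filter (predC p) r -> g x = - g z0.
  move=> x; rewrite mem_filter => /andP[hp xr]; move: hp; rewrite /= /p => hne.
  have : g x ^+ 2 - g z0 ^+ 2 = 0 by rewrite hk // hk // subrr.
  rewrite subr_sqr => /eqP; rewrite mulf_eq0 subr_eq0 (negPf hne) /= addr_eq0 => /eqP //.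
by move=> x y hx hy; rewrite (key x hx) (key y hy).
Qed.

Unset Implicit Arguments.
Theorem corollary2p2 (K : fieldType) (hK : [pchar K] =i pred0) (a : K)
  (ha : a != 0) (n : nat) (L : closedFieldType) (f : {rmorphism K -> L}) :
  let D := map_poly f (dickson n a) in
  ((4 <= n)%N ->
  (exists x1 x2 : L, [/\ x1 != x2, root D^`() x1, root D^`() x2
                        & D.[x1] = D.[x2]])) /\
  ((6 <= n)%N ->
  (exists x1 x2 x3 : L,
     [/\ [&& x1 != x2, x1 != x3 & x2 != x3],
         [&& root D^`() x1, root D^`() x2 & root D^`() x3],
         D.[x1] = D.[x2] & D.[x2] = D.[x3]])).
Proof.
move=> D.
have hL : [pchar L] =i pred0 by move=> p; rewrite (fmorph_pchar f) hK.
have hD : D = dickson n (f a).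
  rewrite /D /dickson rmorph_sum; apply: eq_bigr => j _.
  by rewrite /= map_polyZ map_polyXn /= !rmorphM /= fmorphV !rmorph_nat rmorphXn rmorphN.
have fa0 : f a != 0 by rewrite fmorph_eq0.
rewrite hD; split => hn.
  have [r [ur sr /allP allr [k hk]]] := main_roots hL fa0 (ltn_trans (isT : 0 < 3)%N hn).
  have [s [us ss hs heq]] := classes (m:=2) ur (ltac:(lia) : (2*2-1 <= size r)%N) hk.
  move: us ss hs heq; case: s => [|x1 [|x2 s']] //= us ss _ heq.
  exists x1, x2; split.
  - by move: us; rewrite inE negb_or => /andP[/andP[]].
  - by apply: allr; apply: ss; rewrite inE eqxx.
  - by apply: allr; apply: ss; rewrite !inE eqxx orbT.
  by apply: heq; rewrite !inE eqxx ?orbT.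
have [r [ur sr /allP allr [k hk]]] := main_roots hL fa0 (ltn_trans (isT : 0 < 5)%N hn).
have [s [us ss hs heq]] := classes (m:=3) ur (ltac:(lia) : (2*3-1 <= size r)%N) hk.
move: us ss hs heq; case: s => [|x1 [|x2 [|x3 s']]] //= us ss _ heq.
exists x1, x2, x3; split.
- move: us; rewrite !inE !negb_or => /and3P[/and3P[-> -> _] /andP[-> _] _] //.
- by rewrite !allr // ss // !inE eqxx ?orbT.
- by apply: heq; rewrite !inE eqxx ?orbT.
by apply: heq; rewrite !inE eqxx ?orbT.
Qed.
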